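(* Let $\mathfrak g$, $\{e_i\}$, $\{e^i\}$, $H=U(\mathfrak g\ltimes\mathfrak g^* )$, $Q_1,Q_2$, $:\!Q_1Q_2\!:$, $:\!Q_1Q_2\!:^R$, $\kappa_{ij}$ and $F^{-1}$ (for any $\alpha,\beta$ with $\alpha-\beta=-\frac12$) be as in the context. Let $F^{-1}_{\rm red}\in S(\mathfrak g^* )\otimes S(\mathfrak g^* )[[\hbar]]$ be obtained from $F^{-1}$ by rewriting each tensor factor, using the relations of $H$, as a sum of monomials with all elements of $\mathfrak g^*$ to the left of all elements of $\mathfrak g$, and then discarding all monomials containing an element of $\mathfrak g$. Let $\mathrm{Tr}_{2k}\in S(\mathfrak g^* )$ be the polynomial function $v\mapsto\mathrm{tr}\big(({\rm ad}_v)^{2k}\big)$ on $\mathfrak g$, let $\alpha_{2k}$ be defined by $\sum_{k\ge1}\alpha_{2k}t^{2k}=\frac12\ln\big(\frac{\sinh(t/2)}{t/2}\big)$, and $\gamma=\exp\big(\sum_{k\ge1}\alpha_{2k}\hbar^{2k}\mathrm{Tr}_{2k}\big)$. Then $$F^{-1}_{\rm red}=(\Delta\gamma)(\gamma^{-1}\otimes\gamma^{-1})+O(\hbar^3),$$ where $\Delta$ is the coproduct of $U(\mathfrak g^* )=S(\mathfrak g^* )$ with $\mathfrak g^*$ primitive.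
   Context: $\mathfrak g$ is a finite-dimensional Lie algebra with basis $\{e_i\}$, dual basis $\{e^i\}$; $\mathfrak g\ltimes\mathfrak g^*$ has $\mathfrak g^*$ as abelian ideal and $[x,\phi]=-\phi\circ{\rm ad}_x$; $H=U(\mathfrak g\ltimes\mathfrak g^* )$. $Q_1=e_i\otimes e^i$, $Q_2=e^i\otimes e_i$, $:\!Q_1Q_2\!:\,=e_ie^j\otimes e_je^i$, $:\!Q_1Q_2\!:^R=e^je_i\otimes e^ie_j$, $\kappa_{ij}=-\mathrm{tr}({\rm ad}_{e_i}{\rm ad}_{e_j})$ (sums over repeated indices), and $F^{-1}=1\otimes1+\hbar(\alpha Q_1+\beta Q_2)+\hbar^2\big(\frac{\alpha^2}{2}(Q_1+Q_2)Q_1+\frac{\beta^2}{2}(Q_1+Q_2)Q_2-\frac1{24}(:\!Q_1Q_2\!:+2:\!Q_1Q_2\!:^R+2\kappa_{ij}e^i\otimes e^j)\big)+O(\hbar^3)$. *)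

(* Defs.v *)
From HB Require Import structures.
From mathcomp Require Import all_boot all_order all_algebra.
From mathcomp Require Import mpoly.
Set Implicit Arguments. Unset Strict Implicit. Unset Printing Implicit Defensive.
Import Order.TTheory GRing.Theory.
Local Open Scope ring_scope.

(* The Lie algebra g has basis e_0..e_{n-1} and structure constants c:
   [e_i, e_j] = \sum_k c i j k e_k.                                        *)
Definition is_lie_bracket (R : pzRingType) (n : nat) (c : 'I_n -> 'I_n -> 'I_n -> R) :=
  (forall i j k, c i j k = - c j i k) /\ (forall i, forall k, c i i k = 0) /\
  (forall i j k l, \sum_(m < n) (c j k m * c i m l + c k i m * c j m l
                                 + c i j m * c k m l) = 0).

Section Defs.
Variables (R : fieldType) (n : nat) (c : 'I_n -> 'I_n -> 'I_n -> R).

(* Letters of the tensor algebra of g (+) gdual : inl i = e_i, inr i = e^i. *)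
Definition letter := ('I_n + 'I_n)%type.
Definition word := seq letter.

(* S(gdual) = polynomial functions on g = {mpoly R[n]}, e^i |-> 'X_i.
   Commutator in g |x gdual : [e_i, e^j] = - e^j o ad_{e_i}
                                   = - \sum_l c i l j e^l.               *)
Definition brack_dual (i j : 'I_n) : {mpoly R[n]} :=
  - \sum_(l < n) c i l j *: 'X_l.

(* Moving e_i to the right through a monomial e^{j1}...e^{jm} of S(gdual):
   e_i P = P e_i + sum of the commutator terms, i.e. the commutator terms
   form the derivation of S(gdual) extending e^j |-> [e_i, e^j].          *)
Definition ad_der (i : 'I_n) (p : {mpoly R[n]}) : {mpoly R[n]} :=
  \sum_(j < n) mderiv j p * brack_dual i j.

(* Normal ordering (gdual left of g) followed by discarding every monomial
   containing an element of g.  Processing the word from the right, a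
   monomial whose g-part is nonempty stays so after left multiplication by
   any letter, so such monomials may be discarded as soon as they arise;
   the surviving (pure S(gdual)) part evolves as below.                    *)
Fixpoint red (w : word) : {mpoly R[n]} :=
  match w with
  | [::] => 1
  | inr j :: w' => 'X_j * red w'
  | inl i :: w' => ad_der i (red w')
  end.

(* S(gdual) (x) S(gdual) = {mpoly R[n + n]}; the two tensor embeddings. *)
Definition emb1 (p : {mpoly R[n]}) : {mpoly R[n + n]} :=
  p \mPo [tuple ('X_(lshift n i) : {mpoly R[n + n]}) | i < n].
Definition emb2 (p : {mpoly R[n]}) : {mpoly R[n + n]} :=
  p \mPo [tuple ('X_(rshift n i) : {mpoly R[n + n]}) | i < n].
Definition coprod (p : {mpoly R[n]}) : {mpoly R[n + n]} :=
  p \mPo [tuple ('X_(lshift n i) + 'X_(rshift n i) : {mpoly R[n + n]}) | i < n].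

(* Formal elements of T(g+gdual) (x) T(g+gdual): finite linear combinations of
   pairs of words; they map onto H (x) H. *)
Definition T2 := seq (R * (word * word)).
Definition T2one : T2 := [:: (1, ([::], [::]))].
Definition T2add (a b : T2) : T2 := a ++ b.
Definition T2scale (r : R) (a : T2) : T2 := [seq (r * x.1, x.2) | x <- a].
Definition T2mul (a b : T2) : T2 :=
  [seq (x.1 * y.1, (x.2.1 ++ y.2.1, x.2.2 ++ y.2.2)) | x <- a, y <- b].
Definition T2sum (I : finType) (f : I -> T2) : T2 := flatten [seq f i | i <- enum I].
Definition T2pure (r : R) (u v : word) : T2 := [:: (r, (u, v))].

Definition red2 (a : T2) : {mpoly R[n + n]} :=
  \sum_(x <- a) x.1 *: (emb1 (red x.2.1) * emb2 (red x.2.2)).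

Definition Q1 : T2 := T2sum (fun i : 'I_n => T2pure 1 [:: inl i] [:: inr i]).
Definition Q2 : T2 := T2sum (fun i : 'I_n => T2pure 1 [:: inr i] [:: inl i]).
Definition Q1Q2n : T2 := T2sum (fun ij : 'I_n * 'I_n =>
  T2pure 1 [:: inl ij.1; inr ij.2] [:: inl ij.2; inr ij.1]).
Definition Q1Q2R : T2 := T2sum (fun ij : 'I_n * 'I_n =>
  T2pure 1 [:: inr ij.2; inl ij.1] [:: inr ij.1; inl ij.2]).

(* ad_{e_i} has matrix entries (ad_{e_i})_{k l} = c i l k;
   kappa_{ij} = - tr(ad_{e_i} ad_{e_j}). *)
Definition adm (i : 'I_n) : 'M[R]_n := \matrix_(k < n, l < n) c i l k.
Definition kappa (i j : 'I_n) : R := - \tr (adm i *m adm j).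
Definition Kterm : T2 := T2sum (fun ij : 'I_n * 'I_n =>
  T2pure (kappa ij.1 ij.2) [:: inr ij.1] [:: inr ij.2]).

(* Coefficients of hbar^0, hbar^1, hbar^2 of F^{-1} *)
Definition Finv0 : T2 := T2one.
Definition Finv1 (a b : R) : T2 := T2add (T2scale a Q1) (T2scale b Q2).
Definition Finv2 (a b : R) : T2 :=
  T2add (T2scale (a ^+ 2 / 2%:R) (T2mul (T2add Q1 Q2) Q1))
  (T2add (T2scale (b ^+ 2 / 2%:R) (T2mul (T2add Q1 Q2) Q2))
    (T2scale (- (24%:R)^-1)
       (T2add Q1Q2n (T2add (T2scale 2%:R Q1Q2R) (T2scale 2%:R Kterm))))).
Definition Finv_coef (a b : R) (k : nat) : T2 :=
  match k with 0 => Finv0 | 1 => Finv1 a b | 2 => Finv2 a b | _ => [::] end.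

(* Tr_{2k}(v) = tr((ad_v)^{2k}), with ad_v = \sum_i v_i ad_{e_i}:
   (ad_v)_{k l} = \sum_i c i l k X_i. *)
Definition adv : 'M[{mpoly R[n]}]_n :=
  \matrix_(k < n, l < n) \sum_(i < n) c i l k *: 'X_i.
Definition Tr (k : nat) : {mpoly R[n]} := \tr (adv ^+ (2 * k)).

(* alpha_{2k}: coefficient of t^{2k} in (1/2) ln(sinh(t/2)/(t/2)), computed
   as a formal power series: sinh(t/2)/(t/2) = 1 + u,
   u = \sum_{j>=1} t^{2j} / (4^j (2j+1)!), and ln(1+u) = \sum_{m>=1}
   (-1)^{m+1} u^m / m; terms with j > k or m > k do not contribute. *)
Definition useries (k : nat) : {poly R} :=
  \sum_(1 <= j < k.+1) ((4 ^ j * (2 * j).+1`!)%:R)^-1 *: 'X^(2 * j).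
Definition alpha (k : nat) : R :=
  2%:R^-1 * (\sum_(1 <= m < k.+1)
     ((-1) ^+ m.+1 / m%:R) * ((useries k) ^+ m)`_(2 * k)).

(* exponent of gamma truncated modulo hbar^N, as a polynomial in hbar *)
Definition gexp (N : nat) : {poly {mpoly R[n]}} :=
  \sum_(1 <= k < N) (alpha k *: Tr k)%:P * 'X^(2 * k).
(* exp truncated modulo hbar^N (X has no hbar^0 term) *)
Definition texp (N : nat) (X : {poly {mpoly R[n]}}) : {poly {mpoly R[n]}} :=
  \sum_(m < N) (m`!%:R)^-1 *: X ^+ m.
Definition gamma (N : nat) := texp N (gexp N).
Definition gamma_inv (N : nat) := texp N (- gexp N).

Definition rhs (N : nat) : {poly {mpoly R[n + n]}} :=
  map_poly coprod (gamma N) * map_poly emb1 (gamma_inv N)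
    * map_poly emb2 (gamma_inv N).

End Defs.

(* Main.v *)
Require Import Defs.
From HB Require Import structures.
From mathcomp Require Import all_boot all_order all_algebra.
From mathcomp Require Import mpoly.
From mathcomp Require Import ring.
Import GRing.Theory.
Local Open Scope ring_scope.

Section S.
Variables (R : fieldType) (n : nat) (c : 'I_n -> 'I_n -> 'I_n -> R).

Lemma ad_der0 i : ad_der c i 0 = 0.
Proof. by rewrite /ad_der big1 // => j _; rewrite mderiv0 mul0r. Qed.

Lemma ad_der1 i : ad_der c i 1 = 0.
Proof. by rewrite /ad_der big1 // => j _; rewrite -mpolyC1 mderivC mul0r. Qed.

Lemma mderivXU (i j : 'I_n) : mderiv j ('X_i : {mpoly R[n]}) = (i == j)%:R.
Proof.
rewrite mderivX mnm1E; case: eqP => [->|_]; last by rewrite scale0r.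
have -> : (U_(j) - U_(j))%MM = 0%MM by apply/mnmP=> k; rewrite !mnmE subnn.
by rewrite mpolyX0 scale1r.
Qed.

Lemma ad_derX i j : ad_der c i 'X_j = brack_dual c i j.
Proof.
rewrite /ad_der (bigD1 j) //=.
rewrite mderivXU eqxx mul1r [X in _ + X]big1 ?addr0 // => k hk.
by rewrite mderivXU eq_sym (negbTE hk) mul0r.
Qed.

Lemma red_cons0 x w : red c w = 0 -> red c (x :: w) = 0.
Proof. by case: x => i /= ->; rewrite ?ad_der0 ?mulr0. Qed.

Lemma red_inl w j : red c (w ++ [:: inl j]) = 0.
Proof.
elim: w => [|x w IH] /=; first by rewrite ad_der1.
by apply: red_cons0.
Qed.

Lemma red2_cat a b : red2 c (a ++ b) = red2 c a + red2 c b.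
Proof. by rewrite /red2 big_cat. Qed.

Lemma red2_add a b : red2 c (T2add a b) = red2 c a + red2 c b.
Proof. exact: red2_cat. Qed.

Lemma red2_scale r a : red2 c (T2scale r a) = r *: red2 c a.
Proof.
rewrite /red2 /T2scale big_map scaler_sumr; apply: eq_bigr => x _.
by rewrite scalerA.
Qed.

Lemma red2_sum (I : finType) (f : I -> T2 R n) :
  red2 c (T2sum f) = \sum_i red2 c (f i).
Proof. by rewrite /red2 /T2sum big_flatten /= big_map -big_enum. Qed.

Lemma red2_pure r u v :
  red2 c (T2pure r u v) = r *: (emb1 (red c u) * emb2 (red c v)).
Proof. by rewrite /red2 big_seq1. Qed.

Definition Pz (x : R * (word n * word n)) :=
  (red c x.2.1 == 0) || (red c x.2.2 == 0).

Lemma red2_zero a : all Pz a -> red2 c a = 0.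
Proof.
move=> /allP h; rewrite /red2; apply: big1_seq => x /andP [_ /h] /orP [] /eqP ->;
by rewrite ?rmorph0 /emb1 /emb2 ?raddf0 ?mul0r ?mulr0 scaler0.
Qed.

Lemma all_add a b : all Pz a -> all Pz b -> all Pz (T2add a b).
Proof. by rewrite /T2add all_cat => -> ->. Qed.

Lemma all_scale r a : all Pz a -> all Pz (T2scale r a).
Proof. by move=> h; rewrite all_map; apply: sub_all h => x. Qed.

Lemma all_Q1 : all Pz (Q1 R n).
Proof.
apply/allP => x /flatten_mapP [i _]; rewrite mem_seq1 => /eqP -> /=.
by rewrite /Pz /= ad_der1 eqxx.
Qed.

Lemma all_Q2 : all Pz (Q2 R n).
Proof.
apply/allP => x /flatten_mapP [i _]; rewrite mem_seq1 => /eqP -> /=.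
by rewrite /Pz /= ad_der1 eqxx orbT.
Qed.

Lemma all_Q1Q2R : all Pz (Q1Q2R R n).
Proof.
apply/allP => x /flatten_mapP [i _]; rewrite mem_seq1 => /eqP -> /=.
by rewrite /Pz /= ad_der1 mulr0 eqxx.
Qed.

Lemma all_mulQ1 a : all Pz (T2mul a (Q1 R n)).
Proof.
apply/allP => x /allpairsP [[y z] [_ /= /flatten_mapP [i _]]].
rewrite mem_seq1 => /eqP -> -> /=.
by rewrite /Pz /= red_inl eqxx.
Qed.

Lemma all_mulQ2 a : all Pz (T2mul a (Q2 R n)).
Proof.
apply/allP => x /allpairsP [[y z] [_ /= /flatten_mapP [i _]]].
rewrite mem_seq1 => /eqP -> -> /=.
by rewrite /Pz /= red_inl eqxx orbT.
Qed.

End S.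
Section S2.
Variables (R : fieldType) (n : nat) (c : 'I_n -> 'I_n -> 'I_n -> R).
Hypothesis hanti : forall i j k, c i j k = - c j i k.

Definition LX (l : 'I_n) : {mpoly R[n + n]} := 'X_(lshift n l).
Definition RX (l : 'I_n) : {mpoly R[n + n]} := 'X_(rshift n l).
Definition AA k p := \sum_i c i p k *: LX i.
Definition DD k p := \sum_j c j k p *: RX j.
Definition SS := \sum_k \sum_p AA k p * DD k p.

Lemma emb1X i : emb1 ('X_i : {mpoly R[n]}) = LX i.
Proof. by rewrite /emb1 comp_mpolyXU -tnth_nth tnth_mktuple. Qed.
Lemma emb2X i : emb2 ('X_i : {mpoly R[n]}) = RX i.
Proof. by rewrite /emb2 comp_mpolyXU -tnth_nth tnth_mktuple. Qed.
Lemma coprodX i : coprod ('X_i : {mpoly R[n]}) = LX i + RX i.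
Proof. by rewrite /coprod comp_mpolyXU -tnth_nth tnth_mktuple. Qed.

Lemma comp_sumZ k (lq : n.-tuple {mpoly R[k]}) (f : 'I_n -> R) (x : 'I_n -> {mpoly R[n]}) :
  (\sum_i f i *: x i) \mPo lq = \sum_i f i *: (x i \mPo lq).
Proof. rewrite raddf_sum; apply: eq_bigr => i _; exact: comp_mpolyZ. Qed.

Lemma emb1_bd p k : emb1 (brack_dual c p k) = AA k p.
Proof.
rewrite /brack_dual /emb1 comp_mpolyN comp_sumZ -sumrN; apply: eq_bigr => l _.
by rewrite -/(emb1 _) emb1X hanti scaleNr opprK.
Qed.

Lemma emb2_bd k p : emb2 (brack_dual c k p) = DD k p.
Proof.
rewrite /brack_dual /emb2 comp_mpolyN comp_sumZ -sumrN; apply: eq_bigr => l _.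
by rewrite -/(emb2 _) emb2X hanti scaleNr opprK.
Qed.

Lemma red2_Q1Q2n : red2 c (Q1Q2n R n) = SS.
Proof.
rewrite red2_sum.
under eq_bigr => ij _ do rewrite red2_pure scale1r /= !mulr1 !ad_derX.
transitivity (\sum_i \sum_j emb1 (brack_dual c i j) * emb2 (brack_dual c j i)).
  by rewrite pair_bigA.
rewrite /SS exchange_big; apply: eq_bigr => p _; apply: eq_bigr => k _.
by rewrite emb1_bd emb2_bd.
Qed.

Lemma bilin (f g : 'I_n -> R) (x y : 'I_n -> {mpoly R[n + n]}) :
  (\sum_i f i *: x i) * (\sum_j g j *: y j) =
  \sum_i \sum_j (f i * g j) *: (x i * y j).
Proof.
rewrite mulr_suml; apply: eq_bigr => i _; rewrite mulr_sumr.
by apply: eq_bigr => j _; rewrite -scalerAl -scalerAr scalerA.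
Qed.

Lemma kappaE i j : kappa c i j = - \sum_k \sum_p c i p k * c j k p.
Proof.
rewrite /kappa /mxtrace; congr (- _); apply: eq_bigr => k _.
by rewrite mxE; apply: eq_bigr => p _; rewrite !mxE.
Qed.

Lemma SSE : SS = \sum_i \sum_j \sum_k \sum_p
   (c i p k * c j k p) *: (LX i * RX j).
Proof.
rewrite /SS.
have h1 : forall k, \sum_p AA k p * DD k p =
   \sum_i \sum_j \sum_p (c i p k * c j k p) *: (LX i * RX j).
  move=> k; under eq_bigr => p _ do rewrite /AA /DD bilin.
  by rewrite exchange_big; apply: eq_bigr => i _; exact: exchange_big.
under eq_bigr => k _ do rewrite h1.
by rewrite exchange_big; apply: eq_bigr => i _; exact: exchange_big.
Qed.

Lemma red2_Kterm : red2 c (Kterm c) = - SS.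
Proof.
rewrite red2_sum.
under eq_bigr => ij _ do rewrite red2_pure /= !mulr1 emb1X emb2X.
transitivity (\sum_i \sum_j kappa c i j *: (LX i * RX j)).
  by rewrite pair_bigA.
rewrite SSE.
rewrite -sumrN; apply: eq_bigr => i _; rewrite -sumrN; apply: eq_bigr => j _.
rewrite kappaE scaleNr scaler_suml; congr (- _); apply: eq_bigr => k _.
by rewrite scaler_suml.
Qed.

Lemma Tr1E : Tr c 1 = \sum_k \sum_p (\sum_i c i p k *: 'X_i) * (\sum_j c j k p *: 'X_j).
Proof.
rewrite /Tr muln1 expr2 -mulmxE /mxtrace; apply: eq_bigr => k _.
by rewrite mxE; apply: eq_bigr => p _; rewrite !mxE.
Qed.

Lemma comp_sum k (lq : n.-tuple {mpoly R[k]}) (F : 'I_n -> {mpoly R[n]}) :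
  (\sum_i F i) \mPo lq = \sum_i (F i \mPo lq).
Proof. exact: raddf_sum. Qed.

Lemma compM k (lq : n.-tuple {mpoly R[k]}) (p q : {mpoly R[n]}) :
  (p * q) \mPo lq = (p \mPo lq) * (q \mPo lq).
Proof. exact: rmorphM. Qed.

Lemma TrComp m (f : 'I_n -> {mpoly R[m]}) :
  Tr c 1 \mPo [tuple f i | i < n] =
  \sum_k \sum_p (\sum_i c i p k *: f i) * (\sum_j c j k p *: f j).
Proof.
rewrite Tr1E comp_sum; apply: eq_bigr => k _; rewrite comp_sum.
apply: eq_bigr => p _; rewrite compM !comp_sumZ.
by congr (_ * _); apply: eq_bigr => i _; rewrite comp_mpolyXU -tnth_nth tnth_mktuple.
Qed.

Lemma expand4 (a b x y : {mpoly R[n + n]}) :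
  (a + b) * (x + y) - a * x - b * y = a * y + b * x.
Proof. ring. Qed.

Lemma Tr1_split : coprod (Tr c 1) - emb1 (Tr c 1) - emb2 (Tr c 1) = 2%:R *: SS.
Proof.
rewrite /coprod /emb1 /emb2 !TrComp -!sumrB.
under eq_bigr => k _ do rewrite -!sumrB.
have h : forall k p, (\sum_i c i p k *: ('X_(lshift n i) + 'X_(rshift n i)) : {mpoly R[n+n]})
   = AA k p + \sum_i c i p k *: RX i.
  by move=> k p; rewrite /AA -big_split /=; apply: eq_bigr => i _; rewrite scalerDr.
under eq_bigr => k _ do under eq_bigr => p _ do rewrite !h -/(LX _) expand4.
under eq_bigr => k _ do rewrite big_split /=.
rewrite big_split /= -/SS.
have -> : \sum_k \sum_p (\sum_i c i p k *: RX i) * AA p k = SS.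
  rewrite /SS exchange_big; apply: eq_bigr => p _; apply: eq_bigr => k _.
  by rewrite mulrC.
by rewrite scaler_nat mulr2n.
Qed.
End S2.
Section S3.
Variables (R : fieldType) (n : nat) (c : 'I_n -> 'I_n -> 'I_n -> R).

Lemma texp3_coef (A B : {mpoly R[n]}) i : (i < 3)%N ->
  (texp 3 (A%:P * 'X^2 + B%:P * 'X^4))`_i = if i == 2%N then A else (i == 0%N)%:R.
Proof.
move=> hi.
have hg : A%:P * 'X^2 + B%:P * 'X^4 = 'X^2 * (A%:P + B%:P * 'X^2) by ring.
rewrite /texp coef_sum !big_ord_recr big_ord0 /= add0r !coefZ.
rewrite {3}hg exprMn -exprM coefXnM.
have -> : (i < 2 * 2)%N by apply: leq_trans hi _.
rewrite mulr0 addr0 expr0 expr1 coef1 coefD !coefCM !coefXn.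
have f0 : (0`!%:R)^-1 = 1 :> {mpoly R[n]} by rewrite invr1.
have f1 : (1`!%:R)^-1 = 1 :> {mpoly R[n]} by rewrite invr1.
rewrite f0 !mul1r.
by case: i hi => [|[|[|]]] //= _; rewrite ?mulr0 ?mulr1 ?addr0 ?add0r.
Qed.

Lemma texp3N_coef (A B : {mpoly R[n]}) i : (i < 3)%N ->
  (texp 3 (- (A%:P * 'X^2 + B%:P * 'X^4)))`_i = if i == 2%N then - A else (i == 0%N)%:R.
Proof.
move=> hi.
have -> : - (A%:P * 'X^2 + B%:P * 'X^4) = (- A)%:P * 'X^2 + (- B)%:P * 'X^4.
  by rewrite opprD; congr (_ + _); rewrite polyCN; symmetry; exact: mulNr.
exact: texp3_coef.
Qed.

Lemma gexp3 : gexp c 3 = (alpha R 1 *: Tr c 1)%:P * 'X^2 + (alpha R 2 *: Tr c 2)%:P * 'X^4.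
Proof. by rewrite /gexp big_ltn // big_nat1. Qed.

Lemma gamma_coef i : (i < 3)%N ->
  (gamma c 3)`_i = if i == 2%N then alpha R 1 *: Tr c 1 else (i == 0%N)%:R.
Proof. by move=> hi; rewrite /gamma gexp3 texp3_coef. Qed.

Lemma gamma_inv_coef i : (i < 3)%N ->
  (gamma_inv c 3)`_i = if i == 2%N then - (alpha R 1 *: Tr c 1) else (i == 0%N)%:R.
Proof.
move=> hi; rewrite /gamma_inv gexp3; exact: texp3N_coef.
Qed.

Lemma coef3prod (K : comNzRingType) (p q r : {poly K}) :
  p`_0 = 1 -> p`_1 = 0 -> q`_0 = 1 -> q`_1 = 0 -> r`_0 = 1 -> r`_1 = 0 ->
  [/\ (p * q * r)`_0 = 1, (p * q * r)`_1 = 0 &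
      (p * q * r)`_2 = p`_2 + q`_2 + r`_2].
Proof.
move=> p0 p1 q0 q1 r0 r1.
rewrite !coefM !big_ord_recr !big_ord0 /= !coefM !big_ord_recr !big_ord0 /=.
rewrite p0 p1 q0 q1 r0 r1 /=.
split; ring.
Qed.

Lemma alpha1 : alpha R 1 = (2%:R)^-1 * (24%:R)^-1.
Proof.
rewrite /alpha big_nat1 /useries big_nat1 expr1 coefZ coefXn eqxx mulr1.
have -> : (4 ^ 1 * (2 * 1).+1`!)%N = 24%N by [].
by rewrite expr2 mulrNN mulr1 divr1 mul1r.
Qed.
End S3.

Lemma rhs_coefs (R : fieldType) (n : nat) (c : 'I_n -> 'I_n -> 'I_n -> R) :
  let A := alpha R 1 *: Tr c 1 in
  [/\ (rhs c 3)`_0 = 1, (rhs c 3)`_1 = 0 &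
      (rhs c 3)`_2 = coprod A + emb1 (- A) + emb2 (- A)].
Proof.
move=> A.
have z1 : coprod (0 : {mpoly R[n]}) = 0 by rewrite /coprod comp_mpoly0.
have z2 : emb1 (0 : {mpoly R[n]}) = 0 by rewrite /emb1 comp_mpoly0.
have z3 : emb2 (0 : {mpoly R[n]}) = 0 by rewrite /emb2 comp_mpoly0.
have o1 : coprod (1 : {mpoly R[n]}) = 1 by rewrite /coprod comp_mpoly1.
have o2 : emb1 (1 : {mpoly R[n]}) = 1 by rewrite /emb1 comp_mpoly1.
have o3 : emb2 (1 : {mpoly R[n]}) = 1 by rewrite /emb2 comp_mpoly1.
have g0 := gamma_coef R n c 0 isT.
have g1 := gamma_coef R n c 1 isT.
have g2 := gamma_coef R n c 2 isT.
have i0 := gamma_inv_coef R n c 0 isT.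
have i1 := gamma_inv_coef R n c 1 isT.
have i2 := gamma_inv_coef R n c 2 isT.
rewrite /= in g0 g1 g2 i0 i1 i2.
have [] := @coef3prod _ (map_poly (@coprod R n) (gamma c 3))
  (map_poly (@emb1 R n) (gamma_inv c 3)) (map_poly (@emb2 R n) (gamma_inv c 3)).
- by rewrite (coef_map_id0 _ _ z1) g0 o1.
- by rewrite (coef_map_id0 _ _ z1) g1 z1.
- by rewrite (coef_map_id0 _ _ z2) i0 o2.
- by rewrite (coef_map_id0 _ _ z2) i1 z2.
- by rewrite (coef_map_id0 _ _ z3) i0 o3.
- by rewrite (coef_map_id0 _ _ z3) i1 z3.
move=> h0 h1 h2; rewrite /rhs h0 h1 h2; split => //.
by rewrite !(coef_map_id0 _ _ z1) !(coef_map_id0 _ _ z2) !(coef_map_id0 _ _ z3) g2 i2.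
Qed.

Lemma lin3 (R : fieldType) (n : nat) (al : R) (T : {mpoly R[n]}) :
  coprod (al *: T) + emb1 (- (al *: T)) + emb2 (- (al *: T)) =
  al *: (coprod T - emb1 T - emb2 T).
Proof. by rewrite /coprod /emb1 /emb2 !comp_mpolyN !comp_mpolyZ !scalerBr. Qed.

Lemma final_scal (R : fieldType) (charR0 : [pchar R] =i pred0) (n : nat)
  (S : {mpoly R[n + n]}) (x y : R) :
  x *: 0 + (y *: 0 + - (24%:R)^-1 *: (S + ((2%:R : R) *: 0 + (2%:R : R) *: - S))) =
  ((2%:R)^-1 * (24%:R)^-1) *: ((2%:R : R) *: S).
Proof.
have h2 : (2%:R : R) != 0 by rewrite (pcharf0P R).1.
have h24 : (24%:R : R) != 0 by rewrite (pcharf0P R).1.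
rewrite !scaler0 !add0r scalerN -{1}(scale1r S) -scalerBl !scalerA.
congr (_ *: _); field.
by rewrite h2 h24.
Qed.

Theorem proposition5p5p1 (R : fieldType) (charR0 : [pchar R] =i pred0)
  (n : nat) (c : 'I_n -> 'I_n -> 'I_n -> R) (hc : is_lie_bracket c)
  (a b : R) (hab : a - b = - (2%:R)^-1) :
  forall k : nat, (k < 3)%N ->
    red2 c (Finv_coef c a b k) = (rhs c 3)`_k.
Proof.
have hanti := hc.1.
have [r0 r1 r2] := rhs_coefs R n c.
case=> [|[|[|]]] // _.
- rewrite r0 /red2 /Finv_coef /Finv0 /T2one big_seq1 scale1r /=.
  by rewrite /emb1 /emb2 !comp_mpoly1 mulr1.
- rewrite r1 /Finv_coef; apply: red2_zero; apply: all_add; apply: all_scale.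
    exact: all_Q1.
  exact: all_Q2.
rewrite r2 /Finv_coef /Finv2 !red2_add !red2_scale !red2_add !red2_scale.
rewrite (red2_zero R n c _ (all_mulQ1 R n c _)) (red2_zero R n c _ (all_mulQ2 R n c _)).
rewrite (red2_zero R n c _ (all_Q1Q2R R n c)) (red2_Q1Q2n R n c hanti) (red2_Kterm R n c).
rewrite lin3 (Tr1_split R n c) alpha1.
exact: final_scal.
Qed.
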